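(* Let $(X,Y)$ be distributed according to an $(\alpha,\lambda)$-locally consistent RBM with $\alpha>0$. Let $u\neq v\in V_{obs}$ be such that there is a latent node $k\in V_{lat}$ with $J_{uk}\neq0$ and $J_{vk}\ne0$, and let $S\subseteq V_{obs}\setminus\{u,v\}$. Then \[ \mathrm{Cov}^{\mathrm{avg}}(u,v\mid S)\;\ge\;\alpha^2e^{-12\lambda}. \]
   Context: A Restricted Boltzmann Machine (RBM) with $n$ observed variables $X\in\{\pm1\}^n$ (indexed by $V_{obs}=[n]$) and $m$ latent variables $Y\in\{\pm1\}^m$ (indexed by $V_{lat}=[m]$) is the distribution $\Pr[X=x,Y=y]=\frac1Z\exp(x^TJy+h^Tx+g^Ty)$, where $J\in\mathbb R^{n\times m}$, $h\in\mathbb R^n$, $g\in\mathbb R^m$ are arbitrary and $Z$ is the normalizing constant. Its edge set is $E=\{(i,j):J_{ij}\neq0\}$. The RBM is $(\alpha,\lambda)$-locally consistent if: (i) for each $j\in[m]$, either $J_{ij}\ge0$ for all $i$ or $J_{ij}\le0$ for all $i$; (ii) $|J_{ij}|\ge\alpha$ for every $(i,j)\in E$; (iii) $\sum_j|J_{ij}|+|h_i|\le\lambda$ for all $i\in[n]$; (iv) $\sum_i|J_{ij}|+|g_j|\le\lambda$ for all $j\in[m]$. For observed $u,v$ and $S\subseteq V_{obs}\setminus\{u,v\}$ with configuration $x_S$, $\mathrm{Cov}(u,v\mid X_S=x_S)=\mathbb E[X_uX_v\mid X_S=x_S]-\mathbb E[X_u\mid X_S=x_S]\,\mathbb E[X_v\mid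 X_S=x_S]$, and the average conditional covariance is $\mathrm{Cov}^{\mathrm{avg}}(u,v\mid S)=\mathbb E_{x_S}[\mathrm{Cov}(u,v\mid X_S=x_S)]$, where $x_S$ is drawn from the marginal law of $X_S$. *)

(* Defs.v *)
From HB Require Import structures.
From mathcomp Require Import all_boot.
From Stdlib Require Import Reals.

Set Implicit Arguments.
Unset Strict Implicit.
Unset Printing Implicit Defensive.

Lemma Rplus_assoc' : associative Rplus.
Proof. by move=> a b c; rewrite Rplus_assoc. Qed.
HB.instance Definition _ :=
  Monoid.isComLaw.Build R 0%R Rplus Rplus_assoc' Rplus_comm Rplus_0_l.

Notation "\rsum_ ( i : T ) F" := (\big[Rplus/0%R]_(i : T) F)
  (at level 41, F at level 41, i, T at level 50).
Notation "\rsum_ ( i | P ) F" := (\big[Rplus/0%R]_(i | P) F)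
  (at level 41, F at level 41, i at level 50).

Open Scope R_scope.

Definition spin (b : bool) : R := if b then 1 else -1.

Definition config (k : nat) := {ffun 'I_k -> bool}.

Section RBM.
Variables (n m : nat) (J : 'I_n -> 'I_m -> R) (h : 'I_n -> R) (g : 'I_m -> R).

Definition rbm_weight (x : config n) (y : config m) : R :=
  exp ( (\rsum_(i : 'I_n) \rsum_(j : 'I_m) spin (x i) * J i j * spin (y j))
      + (\rsum_(i : 'I_n) h i * spin (x i))
      + (\rsum_(j : 'I_m) g j * spin (y j)) ).

Definition rbm_Z : R := \rsum_(x : config n) \rsum_(y : config m) rbm_weight x y.

Definition rbm_prob (x : config n) (y : config m) : R := rbm_weight x y / rbm_Z.

Definition rbm_marg (x : config n) : R := \rsum_(y : config m) rbm_prob x y.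

Definition agree_on (S : {set 'I_n}) (x x0 : config n) : bool :=
  [forall i in S, x i == x0 i].

Definition cond_exp (S : {set 'I_n}) (x0 : config n) (f : config n -> R) : R :=
  (\rsum_(x | agree_on S x x0) rbm_marg x * f x) /
  (\rsum_(x | agree_on S x x0) rbm_marg x).

Definition cond_cov (u v : 'I_n) (S : {set 'I_n}) (x0 : config n) : R :=
  cond_exp S x0 (fun x => spin (x u) * spin (x v))
  - cond_exp S x0 (fun x => spin (x u)) * cond_exp S x0 (fun x => spin (x v)).

(* Cov^avg(u,v | S) = E_{x_S}[Cov(u,v | X_S = x_S)], with x_S the restriction to S
   of X drawn from the marginal law of X (equivalently x_S ~ marginal of X_S). *)
Definition avg_cond_cov (u v : 'I_n) (S : {set 'I_n}) : R :=
  \rsum_(x0 : config n) rbm_marg x0 * cond_cov u v S x0.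

Definition locally_consistent (alpha lambda : R) : Prop :=
  (forall j : 'I_m, (forall i : 'I_n, 0 <= J i j) \/ (forall i : 'I_n, J i j <= 0)) /\
  (forall (i : 'I_n) (j : 'I_m), J i j <> 0 -> alpha <= Rabs (J i j)) /\
  (forall i : 'I_n, (\rsum_(j : 'I_m) Rabs (J i j)) + Rabs (h i) <= lambda) /\
  (forall j : 'I_m, (\rsum_(i : 'I_n) Rabs (J i j)) + Rabs (g j) <= lambda).

End RBM.

(* Main.v *)
Require Import Defs.
From HB Require Import structures.
From mathcomp Require Import all_boot.
From Stdlib Require Import Reals Lra.
Open Scope R_scope.

Set Implicit Arguments.
Unset Strict Implicit.


Section Sums.
Variable I : finType.

Lemma rsum_le (P : pred I) (F G : I -> R) :
  (forall i, P i -> F i <= G i) ->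
  \big[Rplus/0]_(i | P i) F i <= \big[Rplus/0]_(i | P i) G i.
Proof.
move=> H; apply: (big_ind2 (fun x y => x <= y)) => //; first lra.
by move=> ? ? ? ? ? ?; lra.
Qed.

Lemma rsum_ge0 (P : pred I) (F : I -> R) :
  (forall i, P i -> 0 <= F i) -> 0 <= \big[Rplus/0]_(i | P i) F i.
Proof.
move=> H; apply: (big_ind (fun x => 0 <= x)) => //; first lra.
by move=> ? ? ? ?; lra.
Qed.

Lemma rsum_mulr (P : pred I) (F : I -> R) c :
  c * \big[Rplus/0]_(i | P i) F i = \big[Rplus/0]_(i | P i) (c * F i).
Proof.
apply: (big_rec2 (fun x y => c * x = y)); first ring.
by move=> i y1 y2 _ <-; ring.
Qed.

Lemma rsum_mull (P : pred I) (F : I -> R) c :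
  (\big[Rplus/0]_(i | P i) F i) * c = \big[Rplus/0]_(i | P i) (F i * c).
Proof.
apply: (big_rec2 (fun x y => x * c = y)); first ring.
by move=> i y1 y2 _ <-; ring.
Qed.

Lemma rsum_abs (P : pred I) (F : I -> R) :
  Rabs (\big[Rplus/0]_(i | P i) F i) <= \big[Rplus/0]_(i | P i) Rabs (F i).
Proof.
apply: (big_rec2 (fun x y => Rabs x <= y)); first by rewrite Rabs_R0; lra.
move=> i y1 y2 _ H; have := Rabs_triang (F i) y1; lra.
Qed.

Lemma rsum_split (P : pred I) (F G : I -> R) :
  \big[Rplus/0]_(i | P i) (F i + G i) =
  \big[Rplus/0]_(i | P i) F i + \big[Rplus/0]_(i | P i) G i.
Proof. exact: big_split. Qed.

Lemma rsum_pos (F : I -> R) (j : I) :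
  (forall i, 0 <= F i) -> 0 < F j -> 0 < \big[Rplus/0]_(i : I) F i.
Proof.
move=> H Hj; rewrite (bigD1 j) //=.
apply: Rplus_lt_le_0_compat => //; exact: rsum_ge0.
Qed.

Lemma rsum_ge_term (P : pred I) (F : I -> R) (j : I) :
  (forall i, P i -> 0 <= F i) -> P j -> F j <= \big[Rplus/0]_(i | P i) F i.
Proof.
move=> H Hj; rewrite (bigD1 j) //=.
have : 0 <= \big[Rplus/0]_(i | P i && (i != j)) F i.
  by apply: rsum_ge0 => i /andP[Pi _]; apply: H.
simpl; lra.
Qed.

End Sums.

Lemma exp_le x y : x <= y -> exp x <= exp y.
Proof.
case=> [H|->]; [left; exact: exp_increasing | right; reflexivity].
Qed.

Definition ADprop (T : finType) (mt jn : T -> T -> T) : Prop :=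
  forall a b c d : T -> R,
  (forall x, 0 <= a x) -> (forall x, 0 <= b x) ->
  (forall x, 0 <= c x) -> (forall x, 0 <= d x) ->
  (forall x y, a x * b y <= c (jn x y) * d (mt x y)) ->
  (\big[Rplus/0]_(x : T) a x) * (\big[Rplus/0]_(x : T) b x) <=
  (\big[Rplus/0]_(x : T) c x) * (\big[Rplus/0]_(x : T) d x).

Lemma AD1 a0 a1 b0 b1 c0 c1 d0 d1 :
  0 <= a0 -> 0 <= a1 -> 0 <= b0 -> 0 <= b1 ->
  0 <= c0 -> 0 <= c1 -> 0 <= d0 -> 0 <= d1 ->
  a0 * b0 <= c0 * d0 -> a1 * b1 <= c1 * d1 ->
  a0 * b1 <= c1 * d0 -> a1 * b0 <= c1 * d0 ->
  (a0 + a1) * (b0 + b1) <= (c0 + c1) * (d0 + d1).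
Proof.
move=> ha0 ha1 hb0 hb1 hc0 hc1 hd0 hd1 h00 h11 h01 h10.
have c0' : 0 <= c1 * d0 by apply: Rmult_le_pos.
move Ec: (c1 * d0) c0' h01 h10 => c c0' h01 h10.
case: (Req_dec c 0) => Hc.
- have e1 : a0 * b1 = 0 by have := Rmult_le_pos _ _ ha0 hb1; lra.
  have e2 : a1 * b0 = 0 by have := Rmult_le_pos _ _ ha1 hb0; lra.
  have := Rmult_le_pos _ _ hc0 hd1.
  have -> : (a0+a1)*(b0+b1) = a0*b0 + a0*b1 + a1*b0 + a1*b1 by ring.
  have -> : (c0+c1)*(d0+d1) = c0*d0 + c0*d1 + c + c1*d1 by rewrite -Ec; ring.
  lra.
- have cpos : 0 < c by lra.
  have step1 : (a0 * b0 + c) * (c + a1 * b1) <= c * ((c0 + c1) * (d0 + d1)).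
    have -> : c * ((c0 + c1) * (d0 + d1)) = (c0 * d0 + c) * (c + c1 * d1)
      by rewrite -Ec; ring.
    apply: Rmult_le_compat; try lra.
    + have := Rmult_le_pos _ _ ha0 hb0; lra.
    + have := Rmult_le_pos _ _ ha1 hb1; lra.
  have step2 : c * ((a0 + a1) * (b0 + b1)) <= (a0 * b0 + c) * (c + a1 * b1).
    have E : (a0 * b0 + c) * (c + a1 * b1) - c * ((a0 + a1) * (b0 + b1))
              = (c - a0 * b1) * (c - a1 * b0) by ring.
    have : 0 <= (c - a0 * b1) * (c - a1 * b0) by apply: Rmult_le_pos; lra.
    lra.
  have := Rmult_le_reg_l c ((a0 + a1) * (b0 + b1)) ((c0 + c1) * (d0 + d1)) cpos.
  lra.
Qed.

Definition bm (t a b : bool) := if t then a && b else a || b.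
Definition bj (t a b : bool) := if t then a || b else a && b.

Lemma AD_bool t : ADprop (bm t) (bj t).
Proof.
move=> a b c d ha hb hc hd H; rewrite !big_bool /=.
case: t H => H.
- have := AD1 (ha false) (ha true) (hb false) (hb true) (hc false) (hc true)
     (hd false) (hd true) (H false false) (H true true) (H false true) (H true false).
  rewrite /bm /bj /= in H *; lra.
- have := AD1 (ha true) (ha false) (hb true) (hb false) (hc true) (hc false)
     (hd true) (hd false) (H true true) (H false false) (H true false) (H false true).
  lra.
Qed.

Lemma sum_pair (T1 T2 : finType) (F : T1 * T2 -> R) :
  \big[Rplus/0]_(p : T1 * T2) F p =
  \big[Rplus/0]_(x : T1) \big[Rplus/0]_(y : T2) F (x, y).
Proof. by rewrite pair_big; apply: eq_bigr => [[]]. Qed.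

Lemma AD_prod (T1 T2 : finType) (m1 j1 : T1 -> T1 -> T1) (m2 j2 : T2 -> T2 -> T2) :
  ADprop m1 j1 -> ADprop m2 j2 ->
  ADprop (T := (T1 * T2)%type) (fun p q => (m1 p.1 q.1, m2 p.2 q.2))
                          (fun p q => (j1 p.1 q.1, j2 p.2 q.2)).
Proof.
move=> H1 H2 a b c d ha hb hc hd H.
rewrite !sum_pair.
apply: H1; try by move=> x; apply: rsum_ge0.
move=> x y; apply: H2 => // x' y'.
all: try exact: (H (x, _) (y, _)).
Qed.

Lemma AD_transfer (T1 T2 : finType) (m1 j1 : T1 -> T1 -> T1) (m2 j2 : T2 -> T2 -> T2)
  (h : T1 -> T2) :
  bijective h ->
  (forall x y, h (m1 x y) = m2 (h x) (h y)) ->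
  (forall x y, h (j1 x y) = j2 (h x) (h y)) ->
  ADprop m1 j1 -> ADprop m2 j2.
Proof.
move=> hb hm hj H a b c d ha hb' hc hd Hab.
have E : forall F : T2 -> R, \big[Rplus/0]_(x : T2) F x = \big[Rplus/0]_(y : T1) F (h y).
  by move=> F; rewrite (reindex h) //; apply: onW_bij.
rewrite !E; apply: H => // x y.
by rewrite hm hj.
Qed.

Definition meetC N (t : 'I_N -> bool) (x y : config N) : config N :=
  [ffun i => bm (t i) (x i) (y i)].
Definition joinC N (t : 'I_N -> bool) (x y : config N) : config N :=
  [ffun i => bj (t i) (x i) (y i)].

Definition consf N (p : bool * config N) : config N.+1 :=
  [ffun i => if unlift ord0 i is Some j then p.2 j else p.1].
Definition unconsf N (z : config N.+1) : bool * config N :=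
  (z ord0, [ffun j => z (lift ord0 j)]).

Lemma consf_bij N : bijective (@consf N).
Proof.
exists (@unconsf N).
- case=> b x; rewrite /unconsf /consf /=; congr pair.
  + by rewrite ffunE unlift_none.
  + by apply/ffunP => j; rewrite !ffunE liftK.
- move=> z; apply/ffunP => i; rewrite /consf /unconsf ffunE /=.
  by case: unliftP => [j ->|->]; rewrite ?ffunE.
Qed.

Lemma AD_config N (t : 'I_N -> bool) : ADprop (meetC t) (joinC t).
Proof.
elim: N t => [|N IH] t.
- have all_eq : forall x y : config 0, x = y.
    by move=> x y; apply/ffunP => -[].
  move=> a b c d ha hb hc hd H.
  set x0 : config 0 := [ffun i => true].
  have E : forall F : config 0 -> R, \big[Rplus/0]_(x : config 0) F x = F x0.
    by move=> F; apply: big_pred1 => x /=; rewrite (all_eq x x0) eqxx.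
  rewrite !E; have := H x0 x0; by rewrite (all_eq (joinC t x0 x0) x0) (all_eq (meetC t x0 x0) x0).
- have := AD_prod (@AD_bool (t ord0)) (IH (fun j => t (lift ord0 j))).
  apply: (AD_transfer (h := @consf N)); first exact: consf_bij.
  + move=> [b x] [b' x']; apply/ffunP => i; rewrite /consf /meetC !ffunE /=.
    by case: unliftP => [j ->|->]; rewrite ?ffunE.
  + move=> [b x] [b' x']; apply/ffunP => i; rewrite /consf /joinC !ffunE /=.
    by case: unliftP => [j ->|->]; rewrite ?ffunE.
Qed.

Section Gen.
Variables (T : finType) (mt jn : T -> T -> T) (nu : T -> R).
Hypothesis hAD : ADprop mt jn.
Hypothesis nu_ge0 : forall x, 0 <= nu x.
Hypothesis lsm : forall x y, nu x * nu y <= nu (jn x y) * nu (mt x y).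

Lemma prod4_le x1 x2 y1 y2 : 0 <= x1 -> 0 <= x2 -> x1 <= y1 -> x2 <= y2 -> x1 * x2 <= y1 * y2.
Proof. by move=> *; apply: Rmult_le_compat. Qed.

Lemma FKG (f g : T -> R) :
  (forall x, 0 <= f x) -> (forall x, 0 <= g x) ->
  (forall x y, 0 < nu x -> 0 < nu y -> f x <= f (jn x y) /\ g y <= g (jn x y)) ->
  (\big[Rplus/0]_(x : T) (nu x * f x)) * (\big[Rplus/0]_(x : T) (nu x * g x)) <=
  (\big[Rplus/0]_(x : T) (nu x * (f x * g x))) * (\big[Rplus/0]_(x : T) nu x).
Proof.
move=> hf hg hm; apply: hAD => [x|x|x|x|x y].
- exact: Rmult_le_pos.
- exact: Rmult_le_pos.
- by apply: Rmult_le_pos => //; apply: Rmult_le_pos.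
- exact: nu_ge0.
have hj := hf (jn x y); have hj' := hg (jn x y).
have hm0 := nu_ge0 (mt x y); have hj0 := nu_ge0 (jn x y).
have R0 : 0 <= nu (jn x y) * (f (jn x y) * g (jn x y)) * nu (mt x y).
  by apply: Rmult_le_pos => //; apply: Rmult_le_pos => //; apply: Rmult_le_pos.
case: (Rle_lt_or_eq_dec 0 (nu x) (nu_ge0 x)) => [px|<-]; last by rewrite !Rmult_0_l.
case: (Rle_lt_or_eq_dec 0 (nu y) (nu_ge0 y)) => [py|<-]; last by rewrite Rmult_0_l Rmult_0_r.
case: (hm x y px py) => h1 h2.
have -> : nu x * f x * (nu y * g y) = (nu x * nu y) * (f x * g y) by ring.
have -> : nu (jn x y) * (f (jn x y) * g (jn x y)) * nu (mt x y) =
          (nu (jn x y) * nu (mt x y)) * (f (jn x y) * g (jn x y)) by ring.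
apply: prod4_le => //.
- by apply: Rmult_le_pos; apply: nu_ge0.
- by apply: Rmult_le_pos.
- exact: prod4_le.
Qed.

Variable eqv : T -> T -> bool.
Hypothesis eqv_refl : forall x, eqv x x.
Hypothesis eqv_sym : forall x y, eqv x y -> eqv y x.
Hypothesis eqv_trans : forall x y z, eqv x y -> eqv y z -> eqv x z.

Definition Cl x := \big[Rplus/0]_(z | eqv z x) nu z.
Definition Ml (f : T -> R) x := \big[Rplus/0]_(z | eqv z x) (nu z * f z).
Definition Ce (f : T -> R) x := Ml f x / Cl x.

Lemma Cl_ge x : nu x <= Cl x.
Proof. by apply: rsum_ge_term => // z _; apply: nu_ge0. Qed.

Lemma Cl_ge0 x : 0 <= Cl x.
Proof. by apply: rsum_ge0 => z _; apply: nu_ge0. Qed.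

Lemma Ml_ge0 f x : (forall z, 0 <= f z) -> 0 <= Ml f x.
Proof. by move=> hf; apply: rsum_ge0 => z _; apply: Rmult_le_pos. Qed.

Lemma Ce_ge0 f x : (forall z, 0 <= f z) -> 0 <= Ce f x.
Proof.
move=> hf; rewrite /Ce; case: (Rle_lt_or_eq_dec 0 (Cl x) (Cl_ge0 x)) => [p|<-].
- by apply: Rmult_le_pos; [apply: Ml_ge0 | left; apply: Rinv_0_lt_compat].
- by rewrite /Rdiv Rinv_0 Rmult_0_r; right.
Qed.

Lemma Cl_eq x y : eqv x y -> Cl x = Cl y.
Proof.
move=> e; apply: eq_bigl => z; apply/idP/idP => h.
- exact: eqv_trans h e.
- exact: eqv_trans h (eqv_sym e).
Qed.

Lemma Ml_eq f x y : eqv x y -> Ml f x = Ml f y.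
Proof.
move=> e; apply: eq_bigl => z; apply/idP/idP => h.
- exact: eqv_trans h e.
- exact: eqv_trans h (eqv_sym e).
Qed.

Lemma tower f :
  \big[Rplus/0]_(x : T) (nu x * Ce f x) = \big[Rplus/0]_(x : T) (nu x * f x).
Proof.
rewrite /Ce /Ml.
have E1 : forall x, nu x * ((\big[Rplus/0]_(z | eqv z x) (nu z * f z)) / Cl x) =
   \big[Rplus/0]_(z : T) (if eqv z x then nu x * (nu z * f z) / Cl x else 0).
  move=> x; rewrite big_mkcond /Rdiv rsum_mull rsum_mulr; apply: eq_bigr => z _.
  by case: ifP => _; ring.
rewrite (eq_bigr _ (fun x _ => E1 x)) exchange_big /=.
apply: eq_bigr => z _.
have E2 : \big[Rplus/0]_(x : T) (if eqv z x then nu x * (nu z * f z) / Cl x else 0) =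
   (nu z * f z) * (\big[Rplus/0]_(x | eqv x z) nu x / Cl z).
  rewrite /Rdiv rsum_mull rsum_mulr [in RHS]big_mkcond; apply: eq_bigr => x _ /=.
  case: ifP => h; case: ifP => h'.
  - by rewrite (Cl_eq h'); ring.
  - by rewrite eqv_sym in h'.
  - by rewrite eqv_sym in h.
  - ring.
rewrite E2 -/(Cl z).
case: (Rle_lt_or_eq_dec 0 (Cl z) (Cl_ge0 z)) => [p|e].
- by rewrite /Rdiv Rinv_r ?Rmult_1_r //; lra.
- have : nu z = 0 by have := Cl_ge z; have := nu_ge0 z; lra.
  by move=> ->; ring.
Qed.

Hypothesis hcl : forall a b c d, eqv c a -> eqv d (jn a b) ->
  eqv (jn c d) (jn a b) /\ eqv (mt c d) a.

Lemma Holley (phi : T -> R) x y :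
  (forall z, 0 <= phi z) ->
  (forall c d, 0 < nu c -> 0 < nu d -> phi c <= phi (jn c d)) ->
  Ml phi x * Cl (jn x y) <= Ml phi (jn x y) * Cl x.
Proof.
move=> hp hm; rewrite /Ml /Cl !(big_mkcond (fun z => eqv z _)).
apply: hAD => [z|z|z|z|c d] /=.
- by case: ifP => _; [apply: Rmult_le_pos | right].
- by case: ifP => _; [apply: nu_ge0 | right].
- by case: ifP => _; [apply: Rmult_le_pos | right].
- by case: ifP => _; [apply: nu_ge0 | right].
have RHS0 : 0 <= (if eqv (jn c d) (jn x y) then nu (jn c d) * phi (jn c d) else 0) *
                (if eqv (mt c d) x then nu (mt c d) else 0).
  apply: Rmult_le_pos; case: ifP => _; try (right; reflexivity).
  + exact: Rmult_le_pos.
  + exact: nu_ge0.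
case hc: (eqv c x); last by rewrite /= Rmult_0_l.
case hd: (eqv d (jn x y)); last by rewrite /= Rmult_0_r.
case: (hcl hc hd) => -> -> /=.
case: (Rle_lt_or_eq_dec 0 (nu c) (nu_ge0 c)) => [pc|<-]; last by rewrite !Rmult_0_l; apply: Rmult_le_pos; [apply: Rmult_le_pos|apply: nu_ge0].
case: (Rle_lt_or_eq_dec 0 (nu d) (nu_ge0 d)) => [pd|<-]; last first.
  by rewrite Rmult_0_r; apply: Rmult_le_pos; [apply: Rmult_le_pos|apply: nu_ge0].
have -> : nu c * phi c * nu d = (nu c * nu d) * phi c by ring.
have -> : nu (jn c d) * phi (jn c d) * nu (mt c d) = (nu (jn c d) * nu (mt c d)) * phi (jn c d) by ring.
apply: prod4_le => //; last exact: hm.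
by apply: Rmult_le_pos; apply: nu_ge0.
Qed.

Lemma nu_jn_pos x y : 0 < nu x -> 0 < nu y -> 0 < nu (jn x y).
Proof.
move=> px py; have h := lsm x y.
case: (Rle_lt_or_eq_dec 0 (nu (jn x y)) (nu_ge0 _)) => // e.
rewrite -e Rmult_0_l in h; have := Rmult_lt_0_compat _ _ px py; lra.
Qed.

Lemma Ce_mono (phi : T -> R) x y :
  (forall z, 0 <= phi z) ->
  (forall c d, 0 < nu c -> 0 < nu d -> phi c <= phi (jn c d)) ->
  0 < nu x -> 0 < nu y -> Ce phi x <= Ce phi (jn x y).
Proof.
move=> hp hm px py.
have c1 : 0 < Cl x by have := Cl_ge x; lra.
have c2 : 0 < Cl (jn x y) by have := Cl_ge (jn x y); have := nu_jn_pos px py; lra.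
have H := Holley x y hp hm.
rewrite /Ce; apply: (Rmult_le_reg_r (Cl x * Cl (jn x y))); first exact: Rmult_lt_0_compat.
have -> : Ml phi x / Cl x * (Cl x * Cl (jn x y)) = Ml phi x * Cl (jn x y) by field; lra.
have -> : Ml phi (jn x y) / Cl (jn x y) * (Cl x * Cl (jn x y)) = Ml phi (jn x y) * Cl x by field; lra.
exact: H.
Qed.

Lemma rsum_sub (F G : T -> R) :
  \big[Rplus/0]_(x : T) (F x - G x) =
  \big[Rplus/0]_(x : T) F x - \big[Rplus/0]_(x : T) G x.
Proof.
apply: (big_rec3 (fun a b c => a = b - c)); first ring.
by move=> i a b c _ ->; ring.
Qed.

Hypothesis jn_comm : forall x y, jn x y = jn y x.

Lemma cov_lower (U V : T -> R) beta :
  (forall z, 0 <= U z) -> (forall z, 0 <= V z) ->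
  (forall c d, U c <= U (jn c d)) -> (forall c d, V c <= V (jn c d)) ->
  (forall x, 0 < nu x -> beta <= Ce (fun z => U z * V z) x - Ce U x * Ce V x) ->
  beta * (\big[Rplus/0]_(x : T) nu x) * (\big[Rplus/0]_(x : T) nu x) <=
  (\big[Rplus/0]_(x : T) nu x) * (\big[Rplus/0]_(x : T) (nu x * (U x * V x))) -
  (\big[Rplus/0]_(x : T) (nu x * U x)) * (\big[Rplus/0]_(x : T) (nu x * V x)).
Proof.
move=> hU hV mU mV hb.
set N := \big[Rplus/0]_(x : T) nu x.
have N0 : 0 <= N by apply: rsum_ge0 => x _; apply: nu_ge0.
have t1 := tower (fun z => U z * V z); have t2 := tower U; have t3 := tower V.
simpl in t1; rewrite -t1 -t2 -t3.
have hF := @FKG (Ce U) (Ce V) (fun x => Ce_ge0 x hU) (fun x => Ce_ge0 x hV).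
have hF' : (\big[Rplus/0]_(x : T) (nu x * Ce U x)) * (\big[Rplus/0]_(x : T) (nu x * Ce V x)) <=
   (\big[Rplus/0]_(x : T) (nu x * (Ce U x * Ce V x))) * N.
  apply: hF => x y px py; split.
  - by apply: Ce_mono => // c d _ _; apply: mU.
  - by rewrite jn_comm; apply: Ce_mono => // c d _ _; apply: mV.
have hS : beta * N <= \big[Rplus/0]_(x : T) (nu x * Ce (fun z => U z * V z) x) -
                    \big[Rplus/0]_(x : T) (nu x * (Ce U x * Ce V x)).
  rewrite -rsum_sub /N rsum_mulr; apply: rsum_le => x _.
  case: (Rle_lt_or_eq_dec 0 (nu x) (nu_ge0 x)) => [p|<-]; last by right; ring.
  rewrite -Rmult_minus_distr_l Rmult_comm; apply: Rmult_le_compat_l; first lra.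
  exact: hb.
have h2 := Rmult_le_compat_l N _ _ N0 hS.
move: hF' h2.
set SU := \big[Rplus/0]_(x : T) (nu x * Ce U x).
set SV := \big[Rplus/0]_(x : T) (nu x * Ce V x).
set P := \big[Rplus/0]_(x : T) (nu x * (Ce U x * Ce V x)).
set Q := \big[Rplus/0]_(x : T) (nu x * Ce (fun z => U z * V z) x).
move=> hF' h2.
have e : N * (Q - P) = N * Q - P * N by ring.
rewrite e in h2.
lra.
Qed.

End Gen.

Definition sp (c : bool) (e : R) := if c then e else / e.

Lemma expspin c x : exp (spin c * x) = sp c (exp x).
Proof.
case: c; rewrite /spin /sp; first by rewrite Rmult_1_l.
by rewrite -exp_Ropp; f_equal; ring.
Qed.

Lemma spin_mul a b : spin a * spin b = spin (a == b).
Proof. by case: a; case: b; rewrite /spin /=; ring. Qed.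

Lemma sinh_bound x al lam : 0 < al -> al <= Rabs x -> Rabs x <= lam ->
  4 * al * exp (- (2 * lam)) <= Rabs (exp (2 * x) - exp (- (2 * x))).
Proof.
move=> ha h1 h2.
have key : forall y, 0 <= y -> al <= y -> y <= lam ->
   4 * al * exp (- (2 * lam)) <= exp (2 * y) - exp (- (2 * y)).
  move=> y y0 y1 y2.
  have -> : exp (2 * y) - exp (- (2 * y)) = exp (- (2 * y)) * (exp (4 * y) - 1).
    rewrite Rmult_minus_distr_l -exp_plus.
    have -> : - (2 * y) + 4 * y = 2 * y by ring.
    by rewrite Rmult_1_r.
  have e1 := exp_ineq1_le (4 * y).
  have e2 : exp (- (2 * lam)) <= exp (- (2 * y)) by apply: exp_le; lra.
  have e3 := exp_pos (- (2 * lam)).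
  rewrite (Rmult_comm (4 * al)).
  apply: Rmult_le_compat; lra.
have P : 0 < 4 * al * exp (- (2 * lam)).
  apply: Rmult_lt_0_compat; [lra | exact: exp_pos].
case: (Rle_dec 0 x) => hx.
- rewrite Rabs_right in h1 h2; try lra.
  have H := key x hx h1 h2.
  rewrite Rabs_right; lra.
- rewrite Rabs_left1 in h1 h2; try lra.
  have := key (- x) ltac:(lra) h1 h2.
  have -> : - (2 * - x) = 2 * x by ring.
  have -> : 2 * - x = - (2 * x) by ring.
  move=> H; rewrite Rabs_left1; lra.
Qed.

Lemma class_real (K Au Av Ak p q al lam : R) (w : bool -> bool -> bool -> R) :
  0 < al -> Rabs Au + Rabs p <= lam -> Rabs Av + Rabs q <= lam -> Rabs Ak <= lam ->
  al <= Rabs p -> al <= Rabs q -> (0 <= p /\ 0 <= q) \/ (p <= 0 /\ q <= 0) ->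
  (forall a b s, w a b s = exp (K + spin a * Au + spin b * Av + spin s * Ak
                                 + spin a * spin s * p + spin b * spin s * q)) ->
  let C := \big[Rplus/0]_(a : bool) \big[Rplus/0]_(b : bool) \big[Rplus/0]_(s : bool) w a b s in
  let MU := \big[Rplus/0]_(a : bool) \big[Rplus/0]_(b : bool) \big[Rplus/0]_(s : bool)
              (w a b s * (spin a + 1)) in
  let MV := \big[Rplus/0]_(a : bool) \big[Rplus/0]_(b : bool) \big[Rplus/0]_(s : bool)
              (w a b s * (spin b + 1)) in
  let MUV := \big[Rplus/0]_(a : bool) \big[Rplus/0]_(b : bool) \big[Rplus/0]_(s : bool)
              (w a b s * ((spin a + 1) * (spin b + 1))) in
  al ^ 2 * exp (- (12 * lam)) <= MUV / C - (MU / C) * (MV / C).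
Proof.
move=> ha hu hv hk hp hq hsg hw C MU MV MUV.
have lam0 : 0 <= lam by have := Rabs_pos Ak; lra.
have hAu := Rle_abs Au; have hAu' : - Au <= Rabs Au by rewrite -Rabs_Ropp; apply: Rle_abs.
have hAv := Rle_abs Av; have hAv' : - Av <= Rabs Av by rewrite -Rabs_Ropp; apply: Rle_abs.
have hAk := Rle_abs Ak; have hAk' : - Ak <= Rabs Ak by rewrite -Rabs_Ropp; apply: Rle_abs.
have hP := Rle_abs p; have hP' : - p <= Rabs p by rewrite -Rabs_Ropp; apply: Rle_abs.
have hQ := Rle_abs q; have hQ' : - q <= Rabs q by rewrite -Rabs_Ropp; apply: Rle_abs.
have wub : forall a b s, w a b s <= exp K * exp (3 * lam).
  move=> a b s; rewrite hw -exp_plus; apply: exp_le.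
  by case: a; case: b; case: s; rewrite /spin; lra.
have wpos : forall a b s, 0 < w a b s by move=> *; rewrite hw; apply: exp_pos.
set eK := exp K; set eu := exp Au; set ev := exp Av; set ek := exp Ak.
set ep := exp p; set eq := exp q; set E3 := exp (3 * lam).
have wE : forall a b s, w a b s = eK * sp a eu * sp b ev * sp s ek * sp (a == s) ep * sp (b == s) eq.
  move=> a b s; rewrite hw !spin_mul !exp_plus !expspin.
  by rewrite /eK /eu /ev /ek /ep /eq; ring.
have Cpos : 0 < C.
  rewrite /C !big_bool /=; have := wpos true true true; have := wpos true true false.
  have := wpos true false true; have := wpos true false false; have := wpos false true true.
  have := wpos false true false; have := wpos false false true; have := wpos false false false.
  lra.
have Cub : C <= 8 * (eK * E3).
  rewrite /C !big_bool /=; have := wub true true true; have := wub true true false.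
  have := wub true false true; have := wub true false false; have := wub false true true.
  have := wub false true false; have := wub false false true; have := wub false false false.
  rewrite -/eK -/E3; lra.
have eK0 : 0 < eK by apply: exp_pos.
have eu0 : 0 < eu by apply: exp_pos.
have ev0 : 0 < ev by apply: exp_pos.
have ek0 : 0 < ek by apply: exp_pos.
have ep0 : 0 < ep by apply: exp_pos.
have eq0 : 0 < eq by apply: exp_pos.
set D := (exp (2 * p) - exp (- (2 * p))) * (exp (2 * q) - exp (- (2 * q))).
have ident : C * MUV - MU * MV = 4 * (eK * eK) * D.
  have e2p : exp (2 * p) = ep * ep by rewrite -exp_plus; f_equal; ring.
  have e2p' : exp (- (2 * p)) = / (ep * ep) by rewrite exp_Ropp e2p.
  have e2q : exp (2 * q) = eq * eq by rewrite -exp_plus; f_equal; ring.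
  have e2q' : exp (- (2 * q)) = / (eq * eq) by rewrite exp_Ropp e2q.
  rewrite /D e2p e2p' e2q e2q' /C /MU /MV /MUV !big_bool /= !wE /sp /spin /=.
  field; repeat split; lra.
have hD : 16 * al ^ 2 * exp (- (4 * lam)) <= D.
  have s1 := sinh_bound (x := p) (lam := lam) ha hp ltac:(have := Rabs_pos Au; lra).
  have s2 := sinh_bound (x := q) (lam := lam) ha hq ltac:(have := Rabs_pos Av; lra).
  have hDabs : D = Rabs (exp (2 * p) - exp (- (2 * p))) * Rabs (exp (2 * q) - exp (- (2 * q))).
    rewrite -Rabs_mult; rewrite Rabs_right //.
    case: hsg => [[p0 q0]|[p0 q0]].
    + apply: Rle_ge; apply: Rmult_le_pos.
      * have := exp_le (x := - (2 * p)) (y := 2 * p) ltac:(lra); lra.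
      * have := exp_le (x := - (2 * q)) (y := 2 * q) ltac:(lra); lra.
    + have h1 := exp_le (x := 2 * p) (y := - (2 * p)) ltac:(lra).
      have h2 := exp_le (x := 2 * q) (y := - (2 * q)) ltac:(lra).
      apply: Rle_ge; nra.
  rewrite hDabs.
  have -> : 16 * al ^ 2 * exp (- (4 * lam)) =
            (4 * al * exp (- (2 * lam))) * (4 * al * exp (- (2 * lam))).
    have -> : - (4 * lam) = - (2 * lam) + - (2 * lam) by ring.
    rewrite exp_plus; ring.
  have P : 0 <= 4 * al * exp (- (2 * lam)).
    by apply: Rmult_le_pos; [lra | left; apply: exp_pos].
  by apply: Rmult_le_compat.
have -> : MUV / C - MU / C * (MV / C) = (C * MUV - MU * MV) / (C * C) by field; lra.
rewrite ident.
have CC : 0 < C * C by apply: Rmult_lt_0_compat.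
apply: (Rmult_le_reg_r (C * C)) => //.
have -> : 4 * (eK * eK) * D / (C * C) * (C * C) = 4 * (eK * eK) * D by field; lra.
have e12 : exp (- (12 * lam)) * (E3 * E3) = exp (- (6 * lam)).
  rewrite /E3 -!exp_plus; f_equal; ring.
have e6 : exp (- (6 * lam)) <= exp (- (4 * lam)) by apply: exp_le; lra.
have A0 : 0 <= al ^ 2 * exp (- (12 * lam)) by apply: Rmult_le_pos; [apply: pow2_ge_0 | left; apply: exp_pos].
have CC2 : C * C <= 64 * (eK * eK) * (E3 * E3).
  have := Rmult_le_compat _ _ _ _ (Rlt_le _ _ Cpos) (Rlt_le _ _ Cpos) Cub Cub; lra.
apply: Rle_trans (Rmult_le_compat_l _ _ _ A0 CC2) _.
have -> : al ^ 2 * exp (- (12 * lam)) * (64 * (eK * eK) * (E3 * E3)) =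
          64 * (eK * eK) * al ^ 2 * (exp (- (12 * lam)) * (E3 * E3)) by ring.
rewrite e12.
have eKK : 0 <= eK * eK by nra.
have al2 : 0 <= al ^ 2 by apply: pow2_ge_0.
have : 64 * (eK * eK) * al ^ 2 * exp (- (6 * lam)) <= 64 * (eK * eK) * al ^ 2 * exp (- (4 * lam)).
  apply: Rmult_le_compat_l => //; nra.
have : 4 * (eK * eK) * (16 * al ^ 2 * exp (- (4 * lam))) <= 4 * (eK * eK) * D.
  apply: Rmult_le_compat_l => //; nra.
lra.
Qed.

Definition Rleb (a b : R) : bool := if Rle_dec a b then true else false.

Lemma term_lsm (t : bool) (Jv : R) xa xb ya yb :
  (t -> 0 <= Jv) -> (~~ t -> Jv <= 0) ->
  spin xa * Jv * spin ya + spin xb * Jv * spin yb <=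
  spin (xa || xb) * Jv * spin (bj t ya yb) + spin (xa && xb) * Jv * spin (bm t ya yb).
Proof.
case: t => H1 H2; [have := H1 isT | have := H2 isT];
case: xa; case: xb; case: ya; case: yb; rewrite /spin /bj /bm /=; lra.
Qed.

Section RBM.
Variables (n m : nat) (J : 'I_n -> 'I_m -> R) (h : 'I_n -> R) (g : 'I_m -> R).
Variables (alpha lambda : R).
Hypothesis lc : locally_consistent J h g alpha lambda.

Definition sig (j : 'I_m) : bool := [forall i, Rleb 0 (J i j)].

Lemma sig_true j : sig j -> forall i, 0 <= J i j.
Proof. by move/forallP => H i; move: (H i); rewrite /Rleb; case: Rle_dec. Qed.

Lemma sig_false j : ~~ sig j -> forall i, J i j <= 0.
Proof.
move/forallPn => [i0]; rewrite /Rleb; case: Rle_dec => // H0 _.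
case: lc => [hs _]; case: (hs j) => // H; exfalso; exact: H0 (H i0).
Qed.

Definition Om := (config n * config m)%type.
Definition ttn : 'I_n -> bool := fun _ => true.
Definition mtO (p q : Om) : Om := (meetC ttn p.1 q.1, meetC sig p.2 q.2).
Definition jnO (p q : Om) : Om := (joinC ttn p.1 q.1, joinC sig p.2 q.2).

Lemma AD_O : ADprop mtO jnO.
Proof. exact: (AD_prod (@AD_config n ttn) (@AD_config m sig)). Qed.

Definition Hf (xx : config n) (yy : config m) : R :=
  (\big[Rplus/0]_(i : 'I_n) \big[Rplus/0]_(j : 'I_m) (spin (xx i) * J i j * spin (yy j)))
  + (\big[Rplus/0]_(i : 'I_n) (h i * spin (xx i)))
  + (\big[Rplus/0]_(j : 'I_m) (g j * spin (yy j))).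

Lemma weightE xx yy : rbm_weight J h g xx yy = exp (Hf xx yy).
Proof. by []. Qed.

Lemma Hf_lsm a b : Hf a.1 a.2 + Hf b.1 b.2 <= Hf (jnO a b).1 (jnO a b).2 + Hf (mtO a b).1 (mtO a b).2.
Proof.
rewrite /Hf.
have A : \big[Rplus/0]_(i : 'I_n) \big[Rplus/0]_(j : 'I_m) (spin (a.1 i) * J i j * spin (a.2 j)) +
         \big[Rplus/0]_(i : 'I_n) \big[Rplus/0]_(j : 'I_m) (spin (b.1 i) * J i j * spin (b.2 j)) <=
         \big[Rplus/0]_(i : 'I_n) \big[Rplus/0]_(j : 'I_m) (spin ((jnO a b).1 i) * J i j * spin ((jnO a b).2 j)) +
         \big[Rplus/0]_(i : 'I_n) \big[Rplus/0]_(j : 'I_m) (spin ((mtO a b).1 i) * J i j * spin ((mtO a b).2 j)).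
  rewrite -!rsum_split; apply: rsum_le => i _; rewrite -!rsum_split; apply: rsum_le => j _.
  rewrite /jnO /mtO /joinC /meetC /= !ffunE /=.
  apply: term_lsm => H; [exact: sig_true H i | exact: sig_false H i].
have B : \big[Rplus/0]_(i : 'I_n) (h i * spin (a.1 i)) + \big[Rplus/0]_(i : 'I_n) (h i * spin (b.1 i)) =
         \big[Rplus/0]_(i : 'I_n) (h i * spin ((jnO a b).1 i)) + \big[Rplus/0]_(i : 'I_n) (h i * spin ((mtO a b).1 i)).
  rewrite -!rsum_split; apply: eq_bigr => i _.
  rewrite /jnO /mtO /joinC /meetC /= !ffunE /=.
  by case: (a.1 i); case: (b.1 i); rewrite /spin /=; ring.
have C : \big[Rplus/0]_(j : 'I_m) (g j * spin (a.2 j)) + \big[Rplus/0]_(j : 'I_m) (g j * spin (b.2 j)) =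
         \big[Rplus/0]_(j : 'I_m) (g j * spin ((jnO a b).2 j)) + \big[Rplus/0]_(j : 'I_m) (g j * spin ((mtO a b).2 j)).
  rewrite -!rsum_split; apply: eq_bigr => j _.
  rewrite /jnO /mtO /joinC /meetC /= !ffunE /=.
  by case: (sig j); case: (a.2 j); case: (b.2 j); rewrite /spin /bj /bm /=; ring.
lra.
Qed.

Variable S : {set 'I_n}.
Variable x0 : config n.

Definition nu (p : Om) : R := if agree_on S p.1 x0 then rbm_weight J h g p.1 p.2 else 0.

Lemma nu_ge0 p : 0 <= nu p.
Proof. by rewrite /nu; case: ifP => _; [left; apply: exp_pos | right]. Qed.

Lemma agree_jn a b : agree_on S a.1 x0 -> agree_on S b.1 x0 ->
  agree_on S (jnO a b).1 x0 && agree_on S (mtO a b).1 x0.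
Proof.
move=> /forallP Ha /forallP Hb; apply/andP; split; apply/forallP => i; apply/implyP => iS;
move/implyP/(_ iS)/eqP: (Ha i) => ea; move/implyP/(_ iS)/eqP: (Hb i) => eb;
by rewrite /jnO /mtO /joinC /meetC /= ffunE /= ea eb; case: (x0 i).
Qed.

Lemma nu_lsm a b : nu a * nu b <= nu (jnO a b) * nu (mtO a b).
Proof.
have R0 : 0 <= nu (jnO a b) * nu (mtO a b) by apply: Rmult_le_pos; apply: nu_ge0.
rewrite {1 2}/nu; case Ha: (agree_on S a.1 x0); last by rewrite Rmult_0_l.
case Hb: (agree_on S b.1 x0); last by rewrite Rmult_0_r.
case/andP: (agree_jn Ha Hb) => Hj Hm.
rewrite /nu Hj Hm !weightE -!exp_plus; apply: exp_le; exact: Hf_lsm.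
Qed.

Lemma jnO_comm a b : jnO a b = jnO b a.
Proof.
rewrite /jnO /joinC; congr pair; apply/ffunP => i; rewrite !ffunE.
- by case: (a.1 i); case: (b.1 i).
- by rewrite /bj; case: (sig i); case: (a.2 i); case: (b.2 i).
Qed.

End RBM.

Section Class.
Variables (n m : nat) (J : 'I_n -> 'I_m -> R) (h : 'I_n -> R) (g : 'I_m -> R).
Variables (u v : 'I_n) (k : 'I_m).
Hypothesis huv : u != v.

Definition eqv (p q : Om n m) : bool :=
  [forall i, ((i != u) && (i != v)) ==> (p.1 i == q.1 i)] &&
  [forall j, (j != k) ==> (p.2 j == q.2 j)].

Lemma eqv_refl p : eqv p p.
Proof. by apply/andP; split; apply/forallP => i; apply/implyP. Qed.

Lemma eqv_sym p q : eqv p q -> eqv q p.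
Proof.
case/andP => /forallP H1 /forallP H2; apply/andP; split; apply/forallP => i;
apply/implyP => hi; [move/implyP/(_ hi)/eqP: (H1 i) | move/implyP/(_ hi)/eqP: (H2 i)] => ->; by [].
Qed.

Lemma eqv_trans p q r : eqv p q -> eqv q r -> eqv p r.
Proof.
case/andP => /forallP H1 /forallP H2; case/andP => /forallP H3 /forallP H4.
apply/andP; split; apply/forallP => i; apply/implyP => hi.
- by move/implyP/(_ hi)/eqP: (H1 i) => ->; move/implyP/(_ hi): (H3 i).
- by move/implyP/(_ hi)/eqP: (H2 i) => ->; move/implyP/(_ hi): (H4 i).
Qed.

Lemma hclO a b c d : eqv c a -> eqv d (jnO J a b) ->
  eqv (jnO J c d) (jnO J a b) /\ eqv (mtO J c d) a.
Proof.
case/andP => /forallP H1 /forallP H2; case/andP => /forallP H3 /forallP H4.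
split; apply/andP; split; apply/forallP => i; apply/implyP => hi.
- move/implyP/(_ hi)/eqP: (H1 i) => e1; move/implyP/(_ hi)/eqP: (H3 i).
  rewrite /jnO /joinC /= !ffunE /= e1 => ->.
  by case: (a.1 i); case: (b.1 i).
- move/implyP/(_ hi)/eqP: (H2 i) => e1; move/implyP/(_ hi)/eqP: (H4 i).
  rewrite /jnO /joinC /= !ffunE /= e1 => ->.
  by rewrite /bj; case: (sig J i); case: (a.2 i); case: (b.2 i).
- move/implyP/(_ hi)/eqP: (H1 i) => e1; move/implyP/(_ hi)/eqP: (H3 i).
  rewrite /jnO /mtO /joinC /meetC /= !ffunE /= e1 => ->.
  by case: (a.1 i); case: (b.1 i).
- move/implyP/(_ hi)/eqP: (H2 i) => e1; move/implyP/(_ hi)/eqP: (H4 i).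
  rewrite /jnO /mtO /joinC /meetC /= !ffunE /= e1 => ->.
  by rewrite /bj /bm; case: (sig J i); case: (a.2 i); case: (b.2 i).
Qed.

Definition upd (p : Om n m) (a b s : bool) : Om n m :=
  ([ffun i => if i == v then b else if i == u then a else p.1 i],
   [ffun j => if j == k then s else p.2 j]).

Lemma upd_u p a b s : (upd p a b s).1 u = a.
Proof. by rewrite ffunE (negbTE huv) eqxx. Qed.
Lemma upd_v p a b s : (upd p a b s).1 v = b.
Proof. by rewrite ffunE eqxx. Qed.
Lemma upd_k p a b s : (upd p a b s).2 k = s.
Proof. by rewrite ffunE eqxx. Qed.
Lemma upd_r p a b s i : (i != u) && (i != v) -> (upd p a b s).1 i = p.1 i.
Proof. by case/andP => h1 h2; rewrite ffunE (negbTE h1) (negbTE h2). Qed.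
Lemma upd_rk p a b s j : j != k -> (upd p a b s).2 j = p.2 j.
Proof. by move=> h1; rewrite ffunE (negbTE h1). Qed.

Lemma eqv_upd p a b s : eqv (upd p a b s) p.
Proof.
apply/andP; split; apply/forallP => i; apply/implyP => hi.
- by rewrite upd_r.
- by rewrite upd_rk.
Qed.

Lemma class_sum p (F : Om n m -> R) :
  \big[Rplus/0]_(z | eqv z p) F z =
  \big[Rplus/0]_(a : bool) \big[Rplus/0]_(b : bool) \big[Rplus/0]_(s : bool) F (upd p a b s).
Proof.
pose hh (t : bool * bool * bool) := upd p t.1.1 t.1.2 t.2.
have bij : {on [pred z | eqv z p], bijective hh}.
  exists (fun z : Om n m => (z.1 u, z.1 v, z.2 k)).
  - by move=> [[a b] s] _; rewrite /hh upd_u upd_v upd_k.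
  - move=> z; rewrite inE => /andP[/forallP H1 /forallP H2].
    rewrite /hh /upd /=; case: z H1 H2 => z1 z2 H1 H2 /=; congr pair; apply/ffunP => i; rewrite ffunE.
    + case: eqP => [->//|/eqP hv]; case: eqP => [->//|/eqP hu].
      by apply/esym/eqP; move/implyP: (H1 i); apply; rewrite hu hv.
    + case: eqP => [->//|/eqP hk].
      by apply/esym/eqP; move/implyP: (H2 i); apply.
rewrite (reindex hh bij) /=.
rewrite (eq_bigl (fun _ => true)); last by move=> t; rewrite /hh eqv_upd.
rewrite sum_pair sum_pair; apply: eq_bigr => a _; apply: eq_bigr => b _.
by [].
Qed.

Lemma splitI (F : 'I_n -> R) :
  \big[Rplus/0]_(i : 'I_n) F i = F u + F v + \big[Rplus/0]_(i | (i != u) && (i != v)) F i.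
Proof.
rewrite (bigD1 u) //= (bigD1 v) /=; last by rewrite eq_sym.
by rewrite Rplus_assoc.
Qed.

Lemma splitJ (G : 'I_m -> R) :
  \big[Rplus/0]_(j : 'I_m) G j = G k + \big[Rplus/0]_(j | j != k) G j.
Proof. by rewrite (bigD1 k). Qed.

Definition Au (p : Om n m) := h u + \big[Rplus/0]_(j | j != k) (J u j * spin (p.2 j)).
Definition Av (p : Om n m) := h v + \big[Rplus/0]_(j | j != k) (J v j * spin (p.2 j)).
Definition Ak (p : Om n m) := g k + \big[Rplus/0]_(i | (i != u) && (i != v)) (spin (p.1 i) * J i k).
Definition Kc (p : Om n m) :=
  \big[Rplus/0]_(i | (i != u) && (i != v)) \big[Rplus/0]_(j | j != k) (spin (p.1 i) * J i j * spin (p.2 j))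
  + \big[Rplus/0]_(i | (i != u) && (i != v)) (h i * spin (p.1 i))
  + \big[Rplus/0]_(j | j != k) (g j * spin (p.2 j)).

Lemma Hf_upd p a b s :
  Hf J h g (upd p a b s).1 (upd p a b s).2 =
  Kc p + spin a * Au p + spin b * Av p + spin s * Ak p
  + spin a * spin s * J u k + spin b * spin s * J v k.
Proof.
set q := upd p a b s.
have E0 := splitI (fun i => \big[Rplus/0]_(j : 'I_m) (spin (q.1 i) * J i j * spin (q.2 j))).
cbv beta in E0.
have E1 : \big[Rplus/0]_(j : 'I_m) (spin (q.1 u) * J u j * spin (q.2 j)) =
          spin a * spin s * J u k + spin a * \big[Rplus/0]_(j | j != k) (J u j * spin (p.2 j)).
  rewrite splitJ /q upd_u upd_k rsum_mulr; congr (_ + _); first ring.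
  by apply: eq_bigr => j hj; rewrite upd_rk //; ring.
have E2 : \big[Rplus/0]_(j : 'I_m) (spin (q.1 v) * J v j * spin (q.2 j)) =
          spin b * spin s * J v k + spin b * \big[Rplus/0]_(j | j != k) (J v j * spin (p.2 j)).
  rewrite splitJ /q upd_v upd_k rsum_mulr; congr (_ + _); first ring.
  by apply: eq_bigr => j hj; rewrite upd_rk //; ring.
have E3 : \big[Rplus/0]_(i | (i != u) && (i != v))
             \big[Rplus/0]_(j : 'I_m) (spin (q.1 i) * J i j * spin (q.2 j)) =
          spin s * \big[Rplus/0]_(i | (i != u) && (i != v)) (spin (p.1 i) * J i k) +
          \big[Rplus/0]_(i | (i != u) && (i != v)) \big[Rplus/0]_(j | j != k)
             (spin (p.1 i) * J i j * spin (p.2 j)).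
  rewrite rsum_mulr -rsum_split; apply: eq_bigr => i hi.
  rewrite splitJ /q upd_r // upd_k; congr (_ + _); first ring.
  by apply: eq_bigr => j hj; rewrite upd_rk.
have E4 : \big[Rplus/0]_(i : 'I_n) (h i * spin (q.1 i)) =
          h u * spin a + h v * spin b + \big[Rplus/0]_(i | (i != u) && (i != v)) (h i * spin (p.1 i)).
  rewrite splitI /q upd_u upd_v; congr (_ + _).
  by apply: eq_bigr => i hi; rewrite upd_r.
have E5 : \big[Rplus/0]_(j : 'I_m) (g j * spin (q.2 j)) =
          g k * spin s + \big[Rplus/0]_(j | j != k) (g j * spin (p.2 j)).
  rewrite splitJ /q upd_k; congr (_ + _).
  by apply: eq_bigr => j hj; rewrite upd_rk.
rewrite /Hf E0 E1 E2 E3 E4 E5 /Kc /Au /Av /Ak; ring.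
Qed.

Lemma Rabs_spinl b x : Rabs (spin b * x) = Rabs x.
Proof. by rewrite Rabs_mult; case: b; rewrite /spin ?Rabs_R1 ?Rabs_Ropp ?Rabs_R1; ring. Qed.
Lemma Rabs_spinr b x : Rabs (x * spin b) = Rabs x.
Proof. by rewrite Rmult_comm Rabs_spinl. Qed.

Variables (alpha lambda : R).
Hypothesis lc : locally_consistent J h g alpha lambda.

Lemma Au_bound p : Rabs (Au p) + Rabs (J u k) <= lambda.
Proof.
case: lc => _ [_ [hr _]]; have := hr u; rewrite splitJ.
have h1 := Rabs_triang (h u) (\big[Rplus/0]_(j | j != k) (J u j * spin (p.2 j))).
have h2 := rsum_abs (fun j => j != k) (fun j => J u j * spin (p.2 j)).
have h3 : \big[Rplus/0]_(j | j != k) Rabs (J u j * spin (p.2 j)) = \big[Rplus/0]_(j | j != k) Rabs (J u j)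
  by apply: eq_bigr => j _; rewrite Rabs_spinr.
rewrite h3 in h2.
rewrite /Au; lra.
Qed.

Lemma Av_bound p : Rabs (Av p) + Rabs (J v k) <= lambda.
Proof.
case: lc => _ [_ [hr _]]; have := hr v; rewrite splitJ.
have h1 := Rabs_triang (h v) (\big[Rplus/0]_(j | j != k) (J v j * spin (p.2 j))).
have h2 := rsum_abs (fun j => j != k) (fun j => J v j * spin (p.2 j)).
have h3 : \big[Rplus/0]_(j | j != k) Rabs (J v j * spin (p.2 j)) = \big[Rplus/0]_(j | j != k) Rabs (J v j)
  by apply: eq_bigr => j _; rewrite Rabs_spinr.
rewrite h3 in h2.
rewrite /Av; lra.
Qed.

Lemma Ak_bound p : Rabs (Ak p) <= lambda.
Proof.
case: lc => _ [_ [_ hc]]; have := hc k; rewrite splitI.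
have h1 := Rabs_triang (g k) (\big[Rplus/0]_(i | (i != u) && (i != v)) (spin (p.1 i) * J i k)).
have h2 := rsum_abs (fun i => (i != u) && (i != v)) (fun i => spin (p.1 i) * J i k).
have h3 : \big[Rplus/0]_(i | (i != u) && (i != v)) Rabs (spin (p.1 i) * J i k) = \big[Rplus/0]_(i | (i != u) && (i != v)) Rabs (J i k)
  by apply: eq_bigr => i _; rewrite Rabs_spinl.
rewrite h3 in h2.
have := Rabs_pos (J u k); have := Rabs_pos (J v k).
rewrite /Ak; lra.
Qed.

End Class.

Section Final.
Variables (n m : nat) (J : 'I_n -> 'I_m -> R) (h : 'I_n -> R) (g : 'I_m -> R).
Variables (alpha lambda : R).
Hypothesis apos : 0 < alpha.
Hypothesis lc : locally_consistent J h g alpha lambda.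
Variables (u v : 'I_n) (k : 'I_m).
Hypothesis huv : u != v.
Hypothesis Juk : J u k <> 0.
Hypothesis Jvk : J v k <> 0.
Variable S : {set 'I_n}.
Hypothesis hu : u \notin S.
Hypothesis hv : v \notin S.
Variable x0 : config n.

Definition Uf (z : Om n m) := spin (z.1 u) + 1.
Definition Vf (z : Om n m) := spin (z.1 v) + 1.

Lemma agree_upd p a b s : agree_on S (upd u v k p a b s).1 x0 = agree_on S p.1 x0.
Proof.
rewrite /agree_on; apply: eq_forallb => i; case hi: (i \in S) => //=.
rewrite upd_r //; apply/andP; split; apply/eqP => e; [move: hu | move: hv]; by rewrite -e hi.
Qed.

Lemma class_bound p : 0 < nu J h g S x0 p ->
  alpha ^ 2 * exp (- (12 * lambda)) <=
  Ce (nu J h g S x0) (eqv u v k) (fun z => Uf z * Vf z) p -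
  Ce (nu J h g S x0) (eqv u v k) Uf p * Ce (nu J h g S x0) (eqv u v k) Vf p.
Proof.
move=> pp.
have agp : agree_on S p.1 x0.
  by move: pp; rewrite /nu; case: ifP => // _; lra.
pose w a b s := nu J h g S x0 (upd u v k p a b s).
have hw : forall a b s, w a b s = exp (Kc J h g u v k p + spin a * Au J h u k p + spin b * Av J h v k p +
           spin s * Ak J g u v k p + spin a * spin s * J u k + spin b * spin s * J v k).
  by move=> a b s; rewrite /w /nu agree_upd agp weightE Hf_upd.
rewrite /Ce /Ml /Cl !(class_sum k huv).
have eU : forall a b s, upd u v k p a b s = upd u v k p a b s by [].
rewrite (eq_bigr (fun a => \big[Rplus/0]_(b : bool) \big[Rplus/0]_(s : bool) (w a b s * ((spin a + 1) * (spin b + 1))))); last first.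
  move=> a _; apply: eq_bigr => b _; apply: eq_bigr => s _.
  by rewrite /Uf /Vf upd_u // upd_v.
rewrite [X in _ <= _ - X / _ * _](eq_bigr (fun a => \big[Rplus/0]_(b : bool) \big[Rplus/0]_(s : bool) (w a b s * (spin a + 1)))); last first.
  move=> a _; apply: eq_bigr => b _; apply: eq_bigr => s _.
  by rewrite /Uf upd_u.
rewrite [X in _ <= _ - _ * (X / _)](eq_bigr (fun a => \big[Rplus/0]_(b : bool) \big[Rplus/0]_(s : bool) (w a b s * (spin b + 1)))); last first.
  move=> a _; apply: eq_bigr => b _; apply: eq_bigr => s _.
  by rewrite /Vf upd_v.
have sg : (0 <= J u k /\ 0 <= J v k) \/ (J u k <= 0 /\ J v k <= 0).
  case: lc => [hs _]; case: (hs k) => H; [left | right]; split; exact: H.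
have hp : alpha <= Rabs (J u k) by case: lc => _ [ha _]; apply: ha.
have hq : alpha <= Rabs (J v k) by case: lc => _ [ha _]; apply: ha.
have a1 : Rabs (Au J h u k p) + Rabs (J u k) <= lambda := Au_bound u k lc p.
have a2 : Rabs (Av J h v k p) + Rabs (J v k) <= lambda := Av_bound v k lc p.
have a3 : Rabs (Ak J g u v k p) <= lambda := Ak_bound k huv lc p.
exact: (class_real apos a1 a2 a3 hp hq sg hw).
Qed.

End Final.

Section Assemble.
Variables (n m : nat) (J : 'I_n -> 'I_m -> R) (h : 'I_n -> R) (g : 'I_m -> R).

Lemma Z_pos : 0 < rbm_Z J h g.
Proof.
rewrite /rbm_Z; apply: (rsum_pos (j := [ffun _ => true])) => [x|].
- by apply: rsum_ge0 => y _; left; apply: exp_pos.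
- by apply: (rsum_pos (j := [ffun _ => true])) => [y|]; [left|]; apply: exp_pos.
Qed.

Lemma marg_ge0 x : 0 <= rbm_marg J h g x.
Proof.
apply: rsum_ge0 => y _; rewrite /rbm_prob /Rdiv; apply: Rmult_le_pos; first by left; apply: exp_pos.
by left; apply: Rinv_0_lt_compat; apply: Z_pos.
Qed.

Lemma marg_total : \big[Rplus/0]_(x : config n) rbm_marg J h g x = 1.
Proof.
have Z0 := Z_pos.
have -> : \big[Rplus/0]_(x : config n) rbm_marg J h g x = rbm_Z J h g * / rbm_Z J h g.
  rewrite /rbm_Z rsum_mull; apply: eq_bigr => x _.
  by rewrite /rbm_marg /rbm_prob rsum_mull.
by apply: Rinv_r; lra.
Qed.

Variable S : {set 'I_n}.
Variable x0 : config n.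

Lemma marg_sum (f : config n -> R) :
  \big[Rplus/0]_(x | agree_on S x x0) (rbm_marg J h g x * f x) =
  (\big[Rplus/0]_(z : Om n m) (nu J h g S x0 z * f z.1)) / rbm_Z J h g.
Proof.
rewrite /Rdiv rsum_mull sum_pair big_mkcond; apply: eq_bigr => x _.
rewrite /rbm_marg /rbm_prob /nu /=; case: ifP => hx.
- rewrite rsum_mull; apply: eq_bigr => y _ /=; rewrite ?hx /Rdiv; ring.
- by rewrite big1 // => y _ /=; rewrite ?hx; ring.
Qed.

Lemma marg_sum1 :
  \big[Rplus/0]_(x | agree_on S x x0) rbm_marg J h g x =
  (\big[Rplus/0]_(z : Om n m) nu J h g S x0 z) / rbm_Z J h g.
Proof.
have := marg_sum (fun _ => 1).
rewrite (eq_bigr (fun x => rbm_marg J h g x)); last by move=> x _; rewrite Rmult_1_r.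
by rewrite (eq_bigr (fun z => nu J h g S x0 z)) // => z _; rewrite Rmult_1_r.
Qed.

Lemma N_pos : 0 < \big[Rplus/0]_(z : Om n m) nu J h g S x0 z.
Proof.
apply: (rsum_pos (j := (x0, [ffun _ => true]))) => [z|]; first exact: nu_ge0.
rewrite /nu /=.
have -> : agree_on S x0 x0 by apply/forallP => i; apply/implyP.
exact: exp_pos.
Qed.

Variables (alpha lambda : R).
Hypothesis apos : 0 < alpha.
Hypothesis lc : locally_consistent J h g alpha lambda.
Variables (u v : 'I_n) (k : 'I_m).
Hypothesis huv : u != v.
Hypothesis Juk : J u k <> 0.
Hypothesis Jvk : J v k <> 0.
Hypothesis hu : u \notin S.
Hypothesis hv : v \notin S.

Lemma cond_cov_bound : alpha ^ 2 * exp (- (12 * lambda)) <= cond_cov J h g u v S x0.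
Proof.
set beta := alpha ^ 2 * exp (- (12 * lambda)).
have hAD : ADprop (mtO J) (jnO J) := @AD_O n m J.
have CL := cov_lower hAD (nu_ge0 J h g S x0) (nu_lsm lc S x0)
  (eqv_refl u v k) (@eqv_sym n m u v k) (@eqv_trans n m u v k) (@hclO n m J u v k)
  (jnO_comm J) (U := @Uf n m u) (V := @Vf n m v) (beta := beta).
have sp0 : forall b, 0 <= spin b + 1 by case; rewrite /spin; lra.
have mon : forall (w : 'I_n) (c d : Om n m), spin (c.1 w) + 1 <= spin ((jnO J c d).1 w) + 1.
  move=> w c d; rewrite /jnO /joinC /= ffunE /=.
  by case: (c.1 w); case: (d.1 w); rewrite /spin /=; lra.
have := CL (fun z => sp0 _) (fun z => sp0 _) (fun c d => mon u c d) (fun c d => mon v c d)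
  (fun p pp => class_bound apos lc huv Juk Jvk hu hv pp).
clear CL.
rewrite /cond_cov /cond_exp !marg_sum marg_sum1 /=.
set N := \big[Rplus/0]_(z : Om n m) nu J h g S x0 z.
set Tuv := \big[Rplus/0]_(z : Om n m) (nu J h g S x0 z * (spin (z.1 u) * spin (z.1 v))).
set Tu := \big[Rplus/0]_(z : Om n m) (nu J h g S x0 z * spin (z.1 u)).
set Tv := \big[Rplus/0]_(z : Om n m) (nu J h g S x0 z * spin (z.1 v)).
have E1 : \big[Rplus/0]_(z : Om n m) (nu J h g S x0 z * (Uf u z * Vf v z)) = Tuv + Tu + Tv + N.
  rewrite /Tuv /Tu /Tv /N -!rsum_split; apply: eq_bigr => z _; rewrite /Uf /Vf; ring.
have E2 : \big[Rplus/0]_(z : Om n m) (nu J h g S x0 z * Uf u z) = Tu + N.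
  rewrite /Tu /N -!rsum_split; apply: eq_bigr => z _; rewrite /Uf; ring.
have E3 : \big[Rplus/0]_(z : Om n m) (nu J h g S x0 z * Vf v z) = Tv + N.
  rewrite /Tv /N -!rsum_split; apply: eq_bigr => z _; rewrite /Vf; ring.
rewrite E1 E2 E3 -/N => H.
have N0 : 0 < N by apply: N_pos.
have Z0 := Z_pos.
have -> : Tuv / rbm_Z J h g / (N / rbm_Z J h g) -
    Tu / rbm_Z J h g / (N / rbm_Z J h g) * (Tv / rbm_Z J h g / (N / rbm_Z J h g)) =
    (N * Tuv - Tu * Tv) / (N * N) by field; lra.
apply: (Rmult_le_reg_r (N * N)); first by apply: Rmult_lt_0_compat.
have -> : (N * Tuv - Tu * Tv) / (N * N) * (N * N) = N * Tuv - Tu * Tv by field; lra.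
have -> : N * Tuv - Tu * Tv = N * (Tuv + Tu + Tv + N) - (Tu + N) * (Tv + N) by ring.
move: H; rewrite /beta; lra.
Qed.

End Assemble.


Unset Implicit Arguments.

Theorem mainTheorem3 (n m : nat) (J : 'I_n -> 'I_m -> R) (h : 'I_n -> R) (g : 'I_m -> R)
    (alpha lambda : R) :
  0 < alpha ->
  locally_consistent J h g alpha lambda ->
  forall (u v : 'I_n), u <> v ->
  (exists k : 'I_m, J u k <> 0 /\ J v k <> 0) ->
  forall S : {set 'I_n}, u \notin S -> v \notin S ->
  alpha ^ 2 * exp (- (12 * lambda)) <= avg_cond_cov J h g u v S.
Proof.
move=> apos lc u v huv [k [Juk Jvk]] S hu hv.
have huv' : u != v by apply/eqP.
rewrite /avg_cond_cov.
apply: (Rle_trans _ (\big[Rplus/0]_(x0 : config n)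
            (rbm_marg J h g x0 * (alpha ^ 2 * exp (- (12 * lambda)))))).
- by rewrite -rsum_mull marg_total Rmult_1_l; right.
- apply: rsum_le => x0 _; apply: Rmult_le_compat_l; first exact: marg_ge0.
  exact: (cond_cov_bound x0 apos lc huv' Juk Jvk hu hv).
Qed.
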